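(* Assume $p\equiv-1\pmod 6$ and let $q=p^f$. Let $S=\{1,5\}\times\{1,\dots,q-1\}$, and let $p$ act on $S$ by $(b,a)\mapsto(b',a')$ where $b'=6-b$ and $a'\in\{1,\dots,q-1\}$ is determined by $$a'\equiv pa-\tfrac{p+1}{6}b+1\pmod{q-1}.$$ Let $S_0=\{(1,a):0<a<q/6\}$ and $S_1=\{(5,a):5q/6<a<q\}$. Then every orbit $o$ of the group $\langle p\rangle$ generated by this action satisfies $|o\cap S_0|=|o\cap S_1|$.
   Context: The map $(b,a)\mapsto(b',a')$ is a bijection of $S$ (it corresponds to multiplication by $p$ on pairs $(i,j)$ with $i\in\{\pm1\}\subset(\mathbb Z/6)^\times$, $j\in\mathbb Z/6(q-1)\mathbb Z$, $j\equiv 6a-b$, $i\equiv b\bmod 6$), so $\langle p\rangle$ acts on the finite set $S$. *)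

(* Defs.v *)
From mathcomp Require Import all_boot all_order all_algebra.
Set Implicit Arguments. Unset Strict Implicit. Unset Printing Implicit Defensive.
Import GRing.Theory Num.Theory.

(* Points (b,a) are encoded in the ambient finite type 'I_6 * 'I_q;
   the set S = {1,5} x {1,...,q-1} is the predicate inS. *)
Definition inS (q : nat) (x : 'I_6 * 'I_q) : bool :=
  ((x.1 == 1 :> nat) || (x.1 == 5 :> nat)) && (0 < x.2)%N.

Definition inS0 (q : nat) (x : 'I_6 * 'I_q) : bool :=
  (x.1 == 1 :> nat) && (0 < x.2)%N && (6 * x.2 < q)%N.

Definition inS1 (q : nat) (x : 'I_6 * 'I_q) : bool :=
  (x.1 == 5 :> nat) && (5 * q < 6 * x.2)%N.

(* The action of p: (b,a) |-> (6-b, a') with a' in {1,...,q-1},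
   a' = p a - ((p+1)/6) b + 1 (mod q-1).  (Values outside S are irrelevant.) *)
Definition actp (p q : nat) (x : 'I_6 * 'I_q) : 'I_6 * 'I_q :=
  let b := nat_of_ord x.1 in
  let a := nat_of_ord x.2 in
  let r : nat :=
    absz ((p%:Z * a%:Z - ((p + 1) %/ 6)%N%:Z * b%:Z + 1) %% (q.-1)%:Z)%Z in
  (insubd x.1 (6 - b)%N, insubd x.2 (if r == 0%N then q.-1 else r)).

(* Main.v *)
Require Import Defs.
From mathcomp Require Import all_boot all_order all_algebra zify ring.
Set Implicit Arguments.
Import GRing.Theory Num.Theory.

Definition enc {q} (x : 'I_6 * 'I_q) : nat := 6 * x.2 - x.1.

Lemma step (p q : nat) (x : 'I_6 * 'I_q) : p %% 6 = 5 -> 1 < q ->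
  inS x -> inS (@actp p q x) /\ enc (@actp p q x) = p * enc x %% (6 * q.-1).
Proof.
move=> hp6 hq; case: x => [b a] /andP[/= hb ha].
set M := q.-1.
have hM : 0 < M by rewrite /M; lia.
have hqM : q = M.+1 by rewrite /M; lia.
have hm : (p + 1) %/ 6 = p %/ 6 + 1.
  rewrite {1}(divn_eq p 6) hp6 -addnA (_ : 5 + 1 = 1 * 6) // -mulnDl mulnK //.
set m := p %/ 6.
have hpm : p = 6 * m + 5 by rewrite {1}(divn_eq p 6) hp6 /m; lia.
have hbv : b = 1 :> nat \/ b = 5 :> nat by move: hb => /orP[/eqP|/eqP]; auto.
have ha' : a < q := ltn_ord a.
set Z := p * a + 1 - (m + 1) * b.
have hZ : ((p%:Z * a%:Z - ((p + 1) %/ 6)%N%:Z * b%:Z + 1) = Z%:Z)%R.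
  rewrite hm /Z /m; case: hbv => ->; nia.
rewrite /actp /= hZ modz_nat absz_nat -/M.
set r := Z %% M.
have hr : r < M := ltn_pmod _ hM.
set a' := (if r == 0 then M else r).
have ha'q : a' < q by rewrite /a'; case: ifP; lia.
have ha'0 : 0 < a' by rewrite /a'; case: ifP; lia.
have Eb : (insubd b (6 - b) : nat) = 6 - b by rewrite val_insubd /=; case: hbv => ->.
have Ea : (insubd a a' : nat) = a' by rewrite val_insubd ha'q.
rewrite /inS /enc /= Eb Ea ha'0 andbT; split; first by case: hbv => ->.
have hZd := divn_eq Z M; rewrite -/r in hZd.
set u := Z %/ M in hZd.
have hZ0 : 0 < Z by rewrite /Z; case: hbv => ->; nia.
have hpZ : p * (6 * a - b) + 6 = 6 * Z + b by rewrite /Z; case: hbv => ->; nia.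
rewrite /a'; case: ifP => /eqP hr0.
  have hu : 0 < u by rewrite hr0 in hZd; nia.
  have -> : p * (6 * a - b) = (u - 1) * (6 * M) + (6 * M - (6 - b)).
    rewrite hr0 addn0 in hZd; case: hbv hpZ => -> hpZ; nia.
  rewrite modnMDl modn_small //; lia.
have -> : p * (6 * a - b) = u * (6 * M) + (6 * r - (6 - b)).
  case: hbv hpZ => -> hpZ; nia.
rewrite modnMDl modn_small //; case: hbv => ->; lia.
Qed.

Lemma qmul (M J : nat) : ((M.+1) * J) %% (6 * M) = (J + M * (J %% 6)) %% (6 * M).
Proof.
have hJ := divn_eq J 6.
have -> : M.+1 * J = (J %/ 6) * (6 * M) + (J + M * (J %% 6)).
  rewrite {1 3}hJ; nia.
by rewrite modnMDl.
Qed.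

Lemma qpow (M J r : nat) : M %% 6 = 0 ->
  ((M.+1) ^ r * J) %% (6 * M) = (J + r * M * (J %% 6)) %% (6 * M).
Proof.
move=> hM; have hMd := divn_eq M 6; rewrite hM addn0 in hMd.
set t := M %/ 6 in hMd.
elim: r => [|r IH]; first by rewrite expn0 mul1n mul0n addn0.
rewrite expnS -mulnA -modnMmr IH modnMmr qmul.
have -> : (J + r * M * (J %% 6)) %% 6 = J %% 6.
  have -> : J + r * M * (J %% 6) = (r * t * (J %% 6)) * 6 + J by rewrite hMd; ring.
  by rewrite modnMDl.
congr (_ %% _); ring.
Qed.

Lemma pmod6 (p n : nat) : p %% 6 = 5 -> p ^ n %% 6 = if odd n then 5 else 1.
Proof.
move=> hp; elim: n => [|n IH] //.
rewrite expnS -modnMm IH hp /=; by case: (odd n).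
Qed.

Definition goodS1 M e := (5 * M < e) && (e %% 6 == 1).
Definition goodS0 M e := (e < M) && (e %% 6 == 5).

Lemma exO0 p f M j : 0 < M -> p ^ f = M.+1 -> M %% 6 = 4 -> j < M -> j %% 6 = 5 ->
  exists k, goodS1 M (p ^ k * j %% (6 * M)) /\ (p ^ k * j %% (6 * M)) %% M = p ^ 0 * j %% M.
Proof.
move=> hM hq hM6 hj hj6; exists f; rewrite hq qmul hj6 modn_small; last lia.
rewrite /goodS1; split; first by apply/andP; split; apply/eqP; lia.
by rewrite expn0 mul1n addnC mulnC modnMDl.
Qed.

Lemma exO1 p f M j : 0 < M -> p ^ f = M.+1 -> M %% 6 = 4 -> 5 * M < j -> j < 6 * M -> j %% 6 = 1 ->
  exists k, goodS0 M (p ^ k * j %% (6 * M)) /\ (p ^ k * j %% (6 * M)) %% M = p ^ 0 * j %% M.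
Proof.
move=> hM hq hM6 hj hj' hj6; exists f; rewrite hq qmul hj6.
have -> : j + M * 1 = 1 * (6 * M) + (j - 5 * M) by lia.
rewrite modnMDl modn_small; last lia.
rewrite /goodS0; split; first by apply/andP; split; apply/eqP; lia.
rewrite expn0 mul1n.
have {2}-> : j = 5 * M + (j - 5 * M) by lia.
by rewrite modnMDl.
Qed.

Lemma exE0 p f M j : 0 < M -> p %% 6 = 5 -> p ^ f = M.+1 -> M %% 6 = 0 -> j < M -> j %% 6 = 5 ->
  exists k, goodS1 M (p ^ k * j %% (6 * M)) /\ (p ^ k * j %% (6 * M)) %% M = p ^ 1 * j %% M.
Proof.
move=> hM hp hq hM6 hj hj6.
set J := p * j %% (6 * M).
have hJ6 : J %% 6 = 1.
  rewrite /J modn_dvdm; last by apply: dvdn_mulr.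
  by rewrite -modnMm hp hj6.
have hJM : J %% M = p * j %% M by rewrite /J modn_dvdm //; apply: dvdn_mull.
have hJN : J < 6 * M by rewrite /J ltn_pmod // muln_gt0.
have hJd := divn_eq J M.
set w := J %/ M in hJd; set s := J %% M in hJd hJM.
have hw : w < 6 by rewrite /w ltn_divLR //.
have hs : s < M by rewrite /s ltn_pmod.
have hMd := divn_eq M 6; rewrite hM6 addn0 in hMd.
have hs6 : s %% 6 = 1.
  move: hJ6; rewrite hJd hMd mulnA modnMDl //.
exists (f * (5 - w) + 1).
have -> : p ^ (f * (5 - w) + 1) * j = M.+1 ^ (5 - w) * (p * j) by rewrite expnD expnM hq expn1 mulnA.
rewrite -modnMmr -/J qpow // hJ6.
have hwM : w * M <= 5 * M by rewrite leq_mul2r; lia.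
have -> : J + (5 - w) * M * 1 = 5 * M + s by rewrite hJd muln1 mulnBl; lia.
rewrite modn_small; last lia.
rewrite /goodS1; split.
  apply/andP; split; first lia.
  by rewrite hMd mulnA modnMDl hs6.
by rewrite expn1 modnMDl modn_small.
Qed.

Lemma exE1 p f M j : 0 < M -> p %% 6 = 5 -> p ^ f = M.+1 -> M %% 6 = 0 -> j < 6 * M -> j %% 6 = 1 ->
  exists k, goodS0 M (p ^ k * j %% (6 * M)) /\ (p ^ k * j %% (6 * M)) %% M = p ^ 1 * j %% M.
Proof.
move=> hM hp hq hM6 hj hj6.
set J := p * j %% (6 * M).
have hJ6 : J %% 6 = 5.
  rewrite /J modn_dvdm; last by apply: dvdn_mulr.
  by rewrite -modnMm hp hj6.
have hJM : J %% M = p * j %% M by rewrite /J modn_dvdm //; apply: dvdn_mull.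
have hJN : J < 6 * M by rewrite /J ltn_pmod // muln_gt0.
have hJd := divn_eq J M.
set w := J %/ M in hJd; set s := J %% M in hJd hJM.
have hw : w < 6 by rewrite /w ltn_divLR //.
have hs : s < M by rewrite /s ltn_pmod.
have hMd := divn_eq M 6; rewrite hM6 addn0 in hMd.
have hs6 : s %% 6 = 5.
  move: hJ6; rewrite hJd hMd mulnA modnMDl //.
exists (f * w + 1).
have -> : p ^ (f * w + 1) * j = M.+1 ^ w * (p * j) by rewrite expnD expnM hq expn1 mulnA.
rewrite -modnMmr -/J qpow // hJ6.
have -> : J + w * M * 5 = w * (6 * M) + s by rewrite hJd; ring.
rewrite modnMDl modn_small; last lia.
rewrite /goodS0; split; first by apply/andP; split; [lia | apply/eqP].
by rewrite expn1 modn_small.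
Qed.

Lemma enc_lt q (x : 'I_6 * 'I_q) : 1 < q -> inS x -> 0 < enc x < 6 * q.-1.
Proof.
case: x => [b a] hq /andP[/= hb ha]; rewrite /enc /=.
have := ltn_ord a; have := ltn_ord b.
move: hb => /orP[/eqP -> | /eqP ->]; lia.
Qed.

Lemma iterA p q k (x : 'I_6 * 'I_q) : p %% 6 = 5 -> 1 < q -> inS x ->
  inS (iter k (@actp p q) x) /\ enc (iter k (@actp p q) x) = p ^ k * enc x %% (6 * q.-1).
Proof.
move=> hp hq hx; elim: k => [|k [IHs IHe]].
  by rewrite /= expn0 mul1n modn_small //; case/andP: (@enc_lt q x hq hx).
have [h1 h2] := @step p q _ hp hq IHs.
by rewrite iterS; split => //; rewrite h2 IHe modnMmr expnS mulnA.
Qed.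

Lemma enc_inj q (x y : 'I_6 * 'I_q) : inS x -> inS y -> enc x = enc y -> x = y.
Proof.
case: x => [b a]; case: y => [b' a'] /andP[/= hb ha] /andP[/= hb' ha'].
rewrite /enc /= => he.
have [eb ea] : b = b' :> nat /\ a = a' :> nat.
  move: hb hb' he => /orP[/eqP -> | /eqP ->] /orP[/eqP -> | /eqP ->]; lia.
by congr pair; apply: val_inj.
Qed.

Lemma S0iff q (x : 'I_6 * 'I_q) : 1 < q -> inS0 x = inS x && goodS0 q.-1 (enc x).
Proof.
case: x => [b a] hq; rewrite /inS0 /inS /goodS0 /enc /=.
have := ltn_ord a; have := ltn_ord b.
case: b => [[|[|[|[|[|[|b]]]]]] hb] /= _ _; lia.
Qed.

Lemma S1iff q (x : 'I_6 * 'I_q) : 1 < q -> inS1 x = inS x && goodS1 q.-1 (enc x).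
Proof.
case: x => [b a] hq; rewrite /inS1 /inS /goodS1 /enc /=.
have := ltn_ord a; have := ltn_ord b.
case: b => [[|[|[|[|[|[|b]]]]]] hb] /= _ _; lia.
Qed.

Lemma card_rel (T : finType) (A B : {set T}) (R : rel T) :
  (forall y, y \in A -> exists z, z \in B /\ R y z) ->
  (forall y y' z, y \in A -> y' \in A -> z \in B -> R y z -> R y' z -> y = y') ->
  #|A| <= #|B|.
Proof.
move=> hex hinj.
pose g y := odflt y [pick z in B | R y z].
have gP : forall y, y \in A -> g y \in B /\ R y (g y).
  move=> y hy; rewrite /g; case: pickP => [z /andP[h1 h2] | H] //=.
  by have [z [hz hr]] := hex y hy; move: (H z); rewrite hz hr.
rewrite -(card_in_imset (f := g)); last first.
  move=> y y' hy hy' e; have [b1 r1] := gP y hy; have [b2 r2] := gP y' hy'.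
  by apply: (hinj y y' (g y)) => //; rewrite e.
apply: subset_leq_card; apply/subsetP => _ /imsetP[y hy ->].
by case: (gP y hy).
Qed.

Lemma canc p f M c j j' : c <= f -> p ^ f = M.+1 -> p ^ c * j %% M = p ^ c * j' %% M -> j %% M = j' %% M.
Proof.
move=> hc hq e.
have key : forall j, j %% M = (p ^ (f - c) * (p ^ c * j %% M)) %% M.
  move=> i; rewrite modnMmr mulnA -expnD subnK // hq mulSn.
  by rewrite addnC mulnC modnMDl.
by rewrite key e -key.
Qed.

Lemma back0 M j j' : goodS0 M j -> goodS0 M j' -> j %% M = j' %% M -> j = j'.
Proof. by case/andP => h1 _ /andP[h2 _]; rewrite !modn_small. Qed.

Lemma back1 M j j' : j < 6 * M -> j' < 6 * M -> goodS1 M j -> goodS1 M j' -> j %% M = j' %% M -> j = j'.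
Proof.
move=> l1 l2 /andP[h1 _] /andP[h2 _].
have {1}-> : j = 5 * M + (j - 5 * M) by lia.
have {1}-> : j' = 5 * M + (j' - 5 * M) by lia.
rewrite !modnMDl !modn_small; lia.
Qed.

Unset Implicit Arguments.

Theorem proposition10p2 (p f : nat) (hp : prime p) (hp6 : p %% 6 = 5)
    (hf : 0 < f) (x : 'I_6 * 'I_(p ^ f)) :
  inS x ->
  #|[set y : 'I_6 * 'I_(p ^ f) | fconnect (@actp p (p ^ f)) x y & inS0 y]| =
  #|[set y : 'I_6 * 'I_(p ^ f) | fconnect (@actp p (p ^ f)) x y & inS1 y]|.
Proof.
move=> _.
have hp1 := prime_gt1 hp.
have hq : 1 < p ^ f.
  apply: (leq_trans hp1); rewrite -{1}(expn1 p) leq_pexp2l //; lia.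
set q := p ^ f in hq *.
set M := q.-1.
have hqM : p ^ f = M.+1 by rewrite /M /q; lia.
have hM : 0 < M by rewrite /M; lia.
have hq6 := @pmod6 p f hp6.
have hM6 : M %% 6 = if odd f then 4 else 0.
  move: hq6; rewrite hqM; case: (odd f); lia.
set c := if odd f then 0 else 1.
have hcf : c <= f by rewrite /c; case: (odd f); lia.
set T := @actp p q.
apply/eqP; rewrite eqn_leq; apply/andP; split.
- apply: (@card_rel _ _ _ (fun y z => enc z %% M == p ^ c * enc y %% M)).
  + move=> y; rewrite inE => /andP[hxy]; rewrite S0iff // => /andP[hyS hg]; rewrite -/M in hg.
    case/andP: (hg) => hlt /eqP h6.
    have [k [hk1 hk2]] : exists k, goodS1 M (p ^ k * enc y %% (6 * M)) /\
        (p ^ k * enc y %% (6 * M)) %% M = p ^ c * enc y %% M.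
      move: hM6; rewrite /c; case: (odd f) => hM6.
        exact: (@exO0 p f M (enc y) hM hqM hM6 hlt h6).
      exact: (@exE0 p f M (enc y) hM hp6 hqM hM6 hlt h6).
    have [zS ze] := @iterA p q k y hp6 hq hyS.
    exists (iter k T y); split; last by rewrite /= ze hk2.
    rewrite inE; apply/andP; split.
      exact: connect_trans hxy (fconnect_iter _ _ _).
    by rewrite S1iff // zS ze.
  + move=> y y' z; rewrite !inE => /andP[_ hy] /andP[_ hy'] _ /eqP r1 /eqP r2.
    rewrite S0iff // in hy; rewrite S0iff // in hy'.
    case/andP: hy => hyS hg; case/andP: hy' => hyS' hg'.
    apply: enc_inj => //; apply: back0 hg hg' _.
    by apply: (@canc p f M c (enc y) (enc y') hcf hqM); rewrite -r1 -r2.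
- apply: (@card_rel _ _ _ (fun y z => enc z %% M == p ^ c * enc y %% M)).
  + move=> y; rewrite inE => /andP[hxy]; rewrite S1iff // => /andP[hyS hg]; rewrite -/M in hg.
    case/andP: (hg) => hlt /eqP h6.
    have /andP[_ hlt'] := @enc_lt q y hq hyS.
    have [k [hk1 hk2]] : exists k, goodS0 M (p ^ k * enc y %% (6 * M)) /\
        (p ^ k * enc y %% (6 * M)) %% M = p ^ c * enc y %% M.
      move: hM6; rewrite /c; case: (odd f) => hM6.
        exact: (@exO1 p f M (enc y) hM hqM hM6 hlt hlt' h6).
      exact: (@exE1 p f M (enc y) hM hp6 hqM hM6 hlt' h6).
    have [zS ze] := @iterA p q k y hp6 hq hyS.
    exists (iter k T y); split; last by rewrite /= ze hk2.
    rewrite inE; apply/andP; split.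
      exact: connect_trans hxy (fconnect_iter _ _ _).
    by rewrite S0iff // zS ze.
  + move=> y y' z; rewrite !inE => /andP[_ hy] /andP[_ hy'] _ /eqP r1 /eqP r2.
    rewrite S1iff // in hy; rewrite S1iff // in hy'.
    case/andP: hy => hyS hg; case/andP: hy' => hyS' hg'.
    have /andP[_ l1] := @enc_lt q y hq hyS.
    have /andP[_ l2] := @enc_lt q y' hq hyS'.
    apply: enc_inj => //; apply: back1 l1 l2 hg hg' _.
    by apply: (@canc p f M c (enc y) (enc y') hcf hqM); rewrite -r1 -r2.
Qed.
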